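(* Let $\mathbb K$ be a commutative semiring with $0\ne1$ and let $S:\mathrm{NW}(\Delta)\to K$ be a regular nested word series. Then $\pi(S):\Delta^*\to K$ is an algebraic formal power series.
   Context: Nested words: $\Delta$ finite alphabet. A nesting relation of width $n$ is a relation $\nu$ on $[n]$ with: $\nu(i,j)\Rightarrow i<j$; $\nu(i,j),\nu(i,j')\Rightarrow j=j'$ and $\nu(i,j),\nu(i',j)\Rightarrow i=i'$; $\nu(i,j),\nu(i',j'),i<i'\Rightarrow j<i'$ or $j'<j$. A nested word is $(w,\nu)$, $w=a_1\cdots a_n\in\Delta^+$, $\nu$ of width $n$; $\mathrm{NW}(\Delta)$ is their set. If $\nu(i,j)$, $i$ is a call and $j$ a return position; others are internal. WNWA over $\mathbb K$: $\mathcal A=(Q,\iota,\delta_{call},\delta_{int},\delta_{ret},\kappa)$, $Q$ finite, $\delta_{call},\delta_{int}:Q\times\Delta\times Q\to K$, $\delta_{ret}:Q\times Q\times\Delta\times Q\to K$, $\iota,\kappa:Q\to K$. A run on $(a_1\cdots a_n,\nu)$ is $(q_0,\dots,q_n)$; weight at $j$: $\delta_{call}(q_{j-1},a_j,q_j)$ for a call $j$, $\delta_{int}(q_{j-1},a_j,q_j)$ for internal $j$, $\delta_{ret}(q_{j-1},q_{i-1},a_j,q_j)$ if $\nu(i,j)$; run weight is the product. $\|\mathcal A\|(nw)=\sum_{(q_0..q_n)}\iota(q_0)\mathrm{wt}\,\kappa(q_n)$. A series is regular if it equals some $\|\mathcal A\|$. Projection: $\pi(w,\nu)=w$ and $\pi(S)(w)=\sum_{nw\in\mathrm{NW}(\Delta),\,\pi(nw)=w}S(nw)$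 for $w\in\Delta^*$ (so $\pi(S)(\varepsilon)=0$). Algebraic series: a formal power series is a map $\Delta^*\to K$; $\varepsilon$ is the empty word; sums and scalar multiples are pointwise and the Cauchy product is $(S_1S_2)(w)=\sum_{w=w_1w_2}S_1(w_1)S_2(w_2)$; a word $u$ is identified with its characteristic series. Let $\mathcal X$ be a finite set of variables disjoint from $\Delta$. A polynomial is a map $P:(\Delta\cup\mathcal X)^*\to K$ with finite support. An algebraic system is a family $(P_X)_{X\in\mathcal X}$ of polynomials; a solution is a family $(S_X)_{X\in\mathcal X}$ of series $\Delta^*\to K$ with $S_X=\sum (P_X,u_1X_1\cdots u_kX_ku_{k+1})\,u_1S_{X_1}\cdots u_kS_{X_k}u_{k+1}$, summing over all $u_1X_1\cdots u_kX_ku_{k+1}$ in the support of $P_X$ ($u_j\in\Delta^*$, $X_j\in\mathcal X$). The system is proper if $P_X(Y)=P_X(\varepsilon)=0$ for all $X,Y\in\mathcal X$; a series $S$ is quasiregular if $S(\varepsilon)=0$. A proper system has exactly one quasiregular solution. A series is algebraic if it is a component $S_X$ of the quasiregular solution of a proper algebraic system. *)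

(* Defs.v *)
From HB Require Import structures.
From mathcomp Require Import all_boot all_order all_algebra.
Set Implicit Arguments. Unset Strict Implicit. Unset Printing Implicit Defensive.
Import GRing.Theory.
Local Open Scope ring_scope.

(* Positions are 0-indexed: position k : 'I_n corresponds to position k+1 of the paper. *)

Definition nesting (n : nat) (nu : {set 'I_n * 'I_n}) : bool :=
  [&& [forall i : 'I_n, forall j : 'I_n, ((i, j) \in nu) ==> (i < j)%N],
      [forall i : 'I_n, forall j : 'I_n, forall j' : 'I_n,
          ((i, j) \in nu) && ((i, j') \in nu) ==> (j == j')],
      [forall i : 'I_n, forall i' : 'I_n, forall j : 'I_n,
          ((i, j) \in nu) && ((i', j) \in nu) ==> (i == i')] &
      [forall i : 'I_n, forall j : 'I_n, forall i' : 'I_n, forall j' : 'I_n,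
          [&& (i, j) \in nu, (i', j') \in nu & (i < i')%N] ==>
          ((j < i')%N || (j' < j)%N)]].

Record nword (D : Type) := NWord {
  nw_w : seq D;
  nw_nu : {set 'I_(size nw_w) * 'I_(size nw_w)} }.

Definition is_nw (D : Type) (x : nword D) : bool :=
  (0 < size (nw_w x))%N && nesting (nw_nu x).

Record wnwa (D : finType) (K : comNzSemiRingType) := WNWA {
  wQ : finType;
  w_iota : wQ -> K;
  w_call : wQ -> D -> wQ -> K;
  w_int : wQ -> D -> wQ -> K;
  w_ret : wQ -> wQ -> D -> wQ -> K;
  w_kappa : wQ -> K }.

(* weight of the transition at position k of run r (r has |w|+1 states q_0..q_n) *)
Definition pos_weight (D : finType) (K : comNzSemiRingType) (A : wnwa D K)
    (x : nword D) (r : {ffun 'I_(size (nw_w x)).+1 -> wQ A})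
    (k : 'I_(size (nw_w x))) : K :=
  let a := tnth (in_tuple (nw_w x)) k in
  let qprev := r (inord k) in
  let qnext := r (inord k.+1) in
  match [pick i : 'I_(size (nw_w x)) | (i, k) \in nw_nu x] with
  | Some i => w_ret qprev (r (inord i)) a qnext
  | None =>
      if [exists j : 'I_(size (nw_w x)), (k, j) \in nw_nu x]
      then w_call qprev a qnext
      else w_int qprev a qnext
  end.

Definition behavior (D : finType) (K : comNzSemiRingType) (A : wnwa D K)
    (x : nword D) : K :=
  \sum_(r : {ffun 'I_(size (nw_w x)).+1 -> wQ A})
     (w_iota (r ord0) * (\prod_(k < size (nw_w x)) pos_weight r k)
      * w_kappa (r ord_max)).

Definition regular_nw (D : finType) (K : comNzSemiRingType) (S : nword D -> K) : Prop :=
  exists A : wnwa D K, forall x : nword D, is_nw x -> S x = behavior A x.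

Definition proj_nw (D : finType) (K : comNzSemiRingType) (S : nword D -> K)
    (w : seq D) : K :=
  if (0 < size w)%N then
    \sum_(nu : {set 'I_(size w) * 'I_(size w)} | nesting nu) S (NWord nu)
  else 0.

Definition series (D : Type) (K : Type) := seq D -> K.

Definition cauchy (D : Type) (K : comNzSemiRingType) (S1 S2 : series D K) : series D K :=
  fun w => \sum_(i < (size w).+1) S1 (take i w) * S2 (drop i w).

Definition char_word (D : eqType) (K : comNzSemiRingType) (u : seq D) : series D K :=
  fun w => (w == u)%:R.

Fixpoint mon_eval (D : eqType) (X : Type) (K : comNzSemiRingType)
    (SX : X -> series D K) (m : seq (D + X)) : series D K :=
  match m with
  | [::] => char_word K [::]
  | inl a :: m' => cauchy (char_word K [:: a]) (mon_eval SX m')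
  | inr x :: m' => cauchy (SX x) (mon_eval SX m')
  end.

(* S is algebraic: it is a component of the quasiregular solution of a proper
   algebraic system (P_x)_{x in X}; polynomials are maps (D+X)^* -> K whose
   supports are contained in the finite duplicate-free list supp. *)
Definition algebraic (D : finType) (K : comNzSemiRingType) (S : series D K) : Prop :=
  exists (X : finType) (P : X -> seq (D + X) -> K) (supp : seq (seq (D + X)))
         (SX : X -> series D K) (x0 : X),
    [/\ uniq supp,
        (forall x u, P x u != 0 -> u \in supp),
        (forall x y, P x [::] = 0 /\ P x [:: inr y] = 0),
        (forall x, SX x [::] = 0) &
        ((forall x w, SX x w = \sum_(u <- supp) P x u * mon_eval SX u w) /\
         (forall w, S w = SX x0 w))].

(* Main.v *)
Require Import Defs.
From mathcomp Require Import all_boot all_order all_algebra.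
From HB Require Import structures.
From mathcomp Require Import zify ring.
From Stdlib Require Import FunctionalExtensionality.
Set Implicit Arguments. Unset Strict Implicit. Unset Printing Implicit Defensive.
Import GRing.Theory.

Module H.

Definition rel := nat -> nat -> bool.

Definition NP (n : nat) (P : rel) : Prop :=
  [/\ forall i j, P i j -> (i < j < n)%N,
      forall i j j', P i j -> P i j' -> j = j',
      forall i i' j, P i j -> P i' j -> i = i' &
      forall i j i' j', P i j -> P i' j' -> (i < i')%N -> (j < i')%N \/ (j' < j)%N].

Definition relof n (nu : {set 'I_n * 'I_n}) : rel :=
  fun i j => [exists x in nu, (x.1 == i :> nat) && (x.2 == j :> nat)].
Definition setof n (P : rel) : {set 'I_n * 'I_n} := [set x : 'I_n * 'I_n | P x.1 x.2].

Lemma relofE n (nu : {set 'I_n * 'I_n}) (i j : 'I_n) : relof nu i j = ((i,j) \in nu).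
Proof.
apply/idP/idP => [/existsP [[a b] /andP[H /andP[/eqP ea /eqP eb]]]|H].
  have -> : i = a by apply: val_inj.
  by have -> : j = b by apply: val_inj.
by apply/existsP; exists (i,j); rewrite H !eqxx.
Qed.

Lemma relof_ex n (nu : {set 'I_n * 'I_n}) i j : relof nu i j ->
  exists (a b : 'I_n), [/\ i = a, j = b & (a,b) \in nu].
Proof.
by move/existsP=> [[a b] /andP[H /andP[/eqP ea /eqP eb]]]; exists a, b; split.
Qed.

Lemma relof_bound n (nu : {set 'I_n * 'I_n}) i j : relof nu i j -> (i < n)%N /\ (j < n)%N.
Proof. by case/relof_ex=> a [b [-> -> _]]. Qed.

Lemma setof_relof n (nu : {set 'I_n * 'I_n}) : setof n (relof nu) = nu.
Proof. by apply/setP => -[a b]; rewrite inE relofE. Qed.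

Lemma relof_setof n P : relof (setof n P) = fun i j => [&& (i < n)%N, (j < n)%N & P i j].
Proof.
apply: functional_extensionality => i; apply: functional_extensionality => j.
apply/idP/idP.
  by case/relof_ex=> a [b [-> -> ]]; rewrite inE /= !ltn_ord.
case/and3P=> hi hj hP.
by rewrite (relofE _ (Ordinal hi) (Ordinal hj)) inE.
Qed.

Lemma relof_setof_NP n P : NP n P -> relof (setof n P) = P.
Proof.
move=> [h1 _ _ _]; rewrite relof_setof.
apply: functional_extensionality => i; apply: functional_extensionality => j.
case hP: (P i j); last by rewrite !andbF.
by have := h1 _ _ hP; rewrite andbT; lia.
Qed.

Lemma nestingP n (nu : {set 'I_n * 'I_n}) : nesting nu <-> NP n (relof nu).
Proof.
split.
  case/and4P=> H1 H2 H3 H4; split.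
  - move=> i j /relof_ex [a [b [-> -> ab]]].
    by have := implyP (forallP (forallP H1 a) b) ab; rewrite ltn_ord andbT.
  - move=> i j j' /relof_ex [a [b [-> -> ab]]] /relof_ex [a' [b' [ea -> ab']]].
    have ea' : a' = a by apply: val_inj.
    subst a'.
    by have := implyP (forallP (forallP (forallP H2 a) b) b'); rewrite ab ab' => /(_ isT) /eqP ->.
  - move=> i i' j /relof_ex [a [b [-> -> ab]]] /relof_ex [a' [b' [-> eb ab']]].
    have eb' : b' = b by apply: val_inj.
    subst b'.
    by have := implyP (forallP (forallP (forallP H3 a) a') b); rewrite ab ab' => /(_ isT) /eqP ->.
  - move=> i j i' j' /relof_ex [a [b [-> -> ab]]] /relof_ex [a' [b' [-> -> ab']]] lt.
    have := implyP (forallP (forallP (forallP (forallP H4 a) b) a') b').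
    by rewrite ab ab' lt => /(_ isT) /orP.
case=> H1 H2 H3 H4; apply/and4P; split.
- apply/forallP=> a; apply/forallP=> b; apply/implyP=> ab.
  by have := H1 a b; rewrite relofE => /(_ ab) /andP[].
- apply/forallP=> a; apply/forallP=> b; apply/forallP=> b'; apply/implyP=> /andP[ab ab'].
  apply/eqP/val_inj; apply: (H2 a); by rewrite relofE.
- apply/forallP=> a; apply/forallP=> a'; apply/forallP=> b; apply/implyP=> /andP[ab ab'].
  apply/eqP/val_inj; apply: (H3 _ _ b); by rewrite relofE.
- apply/forallP=> a; apply/forallP=> b; apply/forallP=> a'; apply/forallP=> b'.
  apply/implyP=> /and3P[ab ab' lt]; apply/orP.
  by apply: (H4 a b a' b') => //; rewrite relofE.
Qed.

Lemma GR (K : nmodType) n (J : finType) (Pj : pred J) (g : J -> rel) (C : rel -> bool)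
  (F : rel -> K) :
  (forall y, Pj y -> NP n (g y) /\ C (g y)) ->
  (forall y y', Pj y -> Pj y' -> g y = g y' -> y = y') ->
  (forall P, NP n P -> C P -> exists2 y, Pj y & g y = P) ->
  (\sum_(nu : {set 'I_n * 'I_n} | nesting nu && C (relof nu)) F (relof nu) =
   \sum_(y | Pj y) F (g y))%R.
Proof.
move=> H1 H2 H3.
rewrite (reindex_omap (fun y => setof n (g y))
          (fun nu => [pick y | Pj y && (setof n (g y) == nu)])); last first.
  move=> nu /andP[/nestingP Hn Hc]; have [y Py gy] := H3 _ Hn Hc.
  case: pickP => [y' /andP[_ /eqP <-] //|none].
  by have := none y; rewrite Py gy setof_relof eqxx.
apply: eq_big => y; last first.
  move=> /andP[_]; case: pickP => [y' /andP[Py' _] /eqP [<-]|//].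
  by rewrite relof_setof_NP //; case: (H1 y' Py').
case Py: (Pj y).
  have [HN HC] := H1 y Py.
  rewrite relof_setof_NP // HC andbT.
  have -> : nesting (setof n (g y)) by apply/nestingP; rewrite relof_setof_NP.
  case: pickP => [y' /andP[Py' /eqP e]|none] /=.
    have e' : g y' = g y.
      have := f_equal (@relof n) e.
      by rewrite !relof_setof_NP //; case: (H1 y' Py').
    by rewrite (H2 _ _ Py' Py e') eqxx.
  by have := none y; rewrite Py eqxx.
case: pickP => [y' /andP[Py' _]|_]; last by rewrite andbF.
case: eqP => [[ey]|]; last by rewrite andbF.
by rewrite ey Py in Py'.
Qed.

Definition shA (P : rel) : rel := fun i j =>
  match i, j with i'.+1, j'.+1 => P i' j' | _, _ => false end.
Definition unA (P : rel) : rel := fun i j => P i.+1 j.+1.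

Lemma NP_shA n P : NP n P -> NP n.+1 (shA P).
Proof.
case=> s f g c; split.
- by move=> [|i] [|j] //= h; have := s _ _ h; lia.
- by move=> [|i] [|j] [|j'] //= h h'; rewrite (f _ _ _ h h').
- by move=> [|i] [|i'] [|j] //= h h'; rewrite (g _ _ _ h h').
- move=> [|i] [|j] [|i'] [|j'] //= h h' lt.
  by have := c _ _ _ _ h h'; lia.
Qed.

Lemma NP_unA n P : NP n.+1 P -> NP n (unA P).
Proof.
case=> s f g c; split; rewrite /unA.
- by move=> i j h; have := s _ _ h; lia.
- by move=> i j j' h h'; have := f _ _ _ h h'; lia.
- by move=> i i' j h h'; have := g _ _ _ h h'; lia.
- by move=> i j i' j' h h' lt; have := c _ _ _ _ h h'; lia.
Qed.

Lemma shA_unA n P : NP n.+1 P -> ~~ has (P 0) (iota 0 n.+1) -> shA (unA P) = P.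
Proof.
case=> s _ _ _ hn.
apply: functional_extensionality => i; apply: functional_extensionality => j.
case: i => [|i]; case: j => [|j] //=.
- by case h: (P 0 0) => //; have := s _ _ h.
- case h: (P 0 j.+1) => //; case/hasP: hn; exists j.+1 => //.
  by rewrite mem_iota; have := s _ _ h; lia.
- by case h: (P i.+1 0) => //; have := s _ _ h.
Qed.

Definition comb (j : nat) (P1 P2 : rel) : rel := fun i k =>
  match i, k with
  | 0, _ => k == j.+1
  | i'.+1, 0 => false
  | i'.+1, k'.+1 => if (i' < j) && (k' < j) then P1 i' k'
                   else if (j < i') && (j < k') then P2 (i' - j.+1) (k' - j.+1) else false
  end.

Lemma comb_in j P1 P2 x y : (x < j)%N -> (y < j)%N -> comb j P1 P2 x.+1 y.+1 = P1 x y.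
Proof. by move=> hx hy /=; rewrite hx hy. Qed.

Lemma comb_out j P1 P2 x y : comb j P1 P2 (x + j.+2) (y + j.+2) = P2 x y.
Proof.
rewrite !addnS /=.
have -> : ((x + j).+1 < j)%N = false by lia.
have -> : (j < (x + j).+1)%N by lia.
have -> : (j < (y + j).+1)%N by lia.
by rewrite !subSS !addnK.
Qed.

Lemma combP j n2 P1 P2 x y : NP j P1 -> NP n2 P2 -> comb j P1 P2 x y ->
  (x = 0 /\ y = j.+1) \/
  (exists x' y', [/\ x = x'.+1, y = y'.+1, (x' < y' < j)%N & P1 x' y']) \/
  (exists x' y', [/\ x = x' + j.+2, y = y' + j.+2, (x' < y' < n2)%N & P2 x' y']).
Proof.
case=> s1 _ _ _ [s2 _ _ _].
case: x => [|x] /=; first by move/eqP ->; left.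
case: y => [|y] //=.
case: ifP => [_ h|_]; first by right; left; exists x, y; split => //; exact: s1.
case: ifP => // /andP[hx hy] h; right; right.
exists (x - j.+1), (y - j.+1); split; [lia|lia|exact: s2|done].
Qed.

Lemma NP_comb j n P1 P2 : (j < n)%N -> NP j P1 -> NP (n - j.+1) P2 -> NP n.+1 (comb j P1 P2).
Proof.
move=> hj N1 N2; have N1' := N1; have N2' := N2.
case: N1' => s1 f1 g1 c1; case: N2' => s2 f2 g2 c2; split.
- move=> x y /(combP N1 N2) [[-> ->]|[[x' [y' [-> -> h _]]]|[x' [y' [-> -> h _]]]]]; lia.
- move=> x y y' /(combP N1 N2) C1 /(combP N1 N2) C2.
  case: C1 => [[e1 e2]|[[a [b [e1 e2 h1 p1]]]|[a [b [e1 e2 h1 p1]]]]];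
  case: C2 => [[e3 e4]|[[a' [b' [e3 e4 h2 p2]]]|[a' [b' [e3 e4 h2 p2]]]]]; try lia.
  + have ea : a = a' by lia.
    by subst; rewrite (f1 _ _ _ p1 p2).
  + have ea : a = a' by lia.
    by subst; rewrite (f2 _ _ _ p1 p2).
- move=> x x' y /(combP N1 N2) C1 /(combP N1 N2) C2.
  case: C1 => [[e1 e2]|[[a [b [e1 e2 h1 p1]]]|[a [b [e1 e2 h1 p1]]]]];
  case: C2 => [[e3 e4]|[[a' [b' [e3 e4 h2 p2]]]|[a' [b' [e3 e4 h2 p2]]]]]; try lia.
  + have eb : b = b' by lia.
    by subst; rewrite (g1 _ _ _ p1 p2).
  + have eb : b = b' by lia.
    by subst; rewrite (g2 _ _ _ p1 p2).
- move=> x y x' y' /(combP N1 N2) C1 /(combP N1 N2) C2 lt.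
  case: C1 => [[e1 e2]|[[a [b [e1 e2 h1 p1]]]|[a [b [e1 e2 h1 p1]]]]];
  case: C2 => [[e3 e4]|[[a' [b' [e3 e4 h2 p2]]]|[a' [b' [e3 e4 h2 p2]]]]]; try lia.
  + have := c1 _ _ _ _ p1 p2; lia.
  + have := c2 _ _ _ _ p1 p2; lia.
Qed.

Definition inn (j : nat) (P : rel) : rel := fun x y => [&& (x < j)%N, (y < j)%N & P x.+1 y.+1].
Definition out (j : nat) (P : rel) : rel := fun x y => P (x + j.+2) (y + j.+2).

Lemma NP_inn n j P : NP n.+1 P -> NP j (inn j P).
Proof.
case=> s f g c; split; rewrite /inn.
- by move=> i k /and3P[a b h]; have := s _ _ h; lia.
- by move=> i k k' /and3P[_ _ h] /and3P[_ _ h']; have := f _ _ _ h h'; lia.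
- by move=> i i' k /and3P[_ _ h] /and3P[_ _ h']; have := g _ _ _ h h'; lia.
- by move=> i k i' k' /and3P[_ _ h] /and3P[_ _ h'] lt; have := c _ _ _ _ h h'; lia.
Qed.

Lemma NP_out n j P : NP n.+1 P -> NP (n - j.+1) (out j P).
Proof.
case=> s f g c; split; rewrite /out.
- by move=> i k h; have := s _ _ h; lia.
- by move=> i k k' h h'; have := f _ _ _ h h'; lia.
- by move=> i i' k h h'; have := g _ _ _ h h'; lia.
- by move=> i k i' k' h h' lt; have := c _ _ _ _ h h'; lia.
Qed.

Lemma comb_inn_out n j P : NP n.+1 P -> P 0 j.+1 -> comb j (inn j P) (out j P) = P.
Proof.
move=> N h0; case: N => s f g c.
apply: functional_extensionality => x; apply: functional_extensionality => y.
case: x => [|x] /=.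
  apply/eqP/idP => [->//|h]; exact: (f _ _ _ h h0).
case: y => [|y]; first by case h: (P x.+1 0) => //; have := s _ _ h.
case: ifP => [/andP[a b]|nab]; first by rewrite /inn a b.
case: ifP => [/andP[a b]|nab2].
  by rewrite /out; congr P; lia.
case h: (P x.+1 y.+1) => //.
have := s _ _ h; have := c _ _ _ _ h0 h; move/(_ isT).
move: nab nab2; case: (ltnP x j); case: (ltnP y j); case: (ltnP j x); case: (ltnP j y) => //=; lia.
Qed.

Lemma SD (K : nmodType) n (F : rel -> K) :
  (\sum_(nu : {set 'I_n.+1 * 'I_n.+1} | nesting nu) F (relof nu) =
  \sum_(nu : {set 'I_n * 'I_n} | nesting nu) F (shA (relof nu)) +
  \sum_(i < n) \sum_(x : {set 'I_i * 'I_i} * {set 'I_(n - i.+1) * 'I_(n - i.+1)} |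
        nesting x.1 && nesting x.2) F (comb i (relof x.1) (relof x.2)))%R.
Proof.
rewrite (bigID (fun nu => has (relof nu 0) (iota 0 n.+1))) /= GRing.addrC.
congr (_ + _)%R.
  apply: (@GR K n.+1 _ _ (fun nu => shA (relof nu)) (fun P => ~~ has (P 0) (iota 0 n.+1))).
  - move=> y /nestingP hy; split; first exact: NP_shA.
    by apply/hasP => -[x _].
  - move=> y y' _ _ e.
    rewrite -(setof_relof y) -(setof_relof y'); congr setof.
    apply: functional_extensionality => i; apply: functional_extensionality => j.
    exact: (congr1 (fun f => f i.+1 j.+1) e).
  - move=> P hP hc; exists (setof n (unA P)).
      by apply/nestingP; rewrite relof_setof_NP; exact: NP_unA.
    rewrite relof_setof_NP; first exact: (shA_unA hP hc).
    exact: NP_unA hP.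
transitivity (\sum_(i < n) \sum_(nu : {set 'I_n.+1 * 'I_n.+1} | nesting nu && relof nu 0 i.+1)
                 F (relof nu))%R; last first.
  apply: eq_bigr => i _.
  apply: (@GR K n.+1 ({set 'I_i * 'I_i} * {set 'I_(n - i.+1) * 'I_(n - i.+1)})%type
           (fun x => nesting x.1 && nesting x.2)
           (fun x => comb i (relof x.1) (relof x.2)) (fun P => P 0 i.+1)).
  - move=> [y1 y2] /andP[/nestingP h1 /nestingP h2] /=; split; last by rewrite /= eqxx.
    exact: NP_comb.
  - move=> [y1 y2] [y1' y2'] /andP[/= /nestingP h1 /nestingP h2] /andP[/= /nestingP h1' /nestingP h2'] /= e.
    have e1 : relof y1 = relof y1'.
      apply: functional_extensionality => a; apply: functional_extensionality => b.
      case: (boolP ((a < i) && (b < i))%N) => [/andP[ha hb]|hab].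
        by rewrite -(@comb_in i (relof y1) (relof y2) a b ha hb) -(@comb_in i (relof y1') (relof y2') a b ha hb) e.
      case h: (relof y1 a b); first by case: (relof_bound h) => x z; rewrite x z in hab.
      case h': (relof y1' a b) => //; by case: (relof_bound h') => x z; rewrite x z in hab.
    have e2 : relof y2 = relof y2'.
      apply: functional_extensionality => a; apply: functional_extensionality => b.
      by rewrite -(@comb_out i (relof y1) _ a b) -(@comb_out i (relof y1') _ a b) e.
    by rewrite -(setof_relof y1) -(setof_relof y1') -(setof_relof y2) -(setof_relof y2') e1 e2.
  - move=> P hP h0; exists (setof i (inn i P), setof (n - i.+1) (out i P)).
      rewrite /=; apply/andP; split; apply/nestingP; rewrite relof_setof_NP;
        solve [exact: NP_inn hP | exact: NP_out hP].
    rewrite /= !relof_setof_NP; first exact: (comb_inn_out hP h0).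
    exact: NP_out hP. exact: NP_inn hP.
rewrite (exchange_big_dep predT) // big_mkcondr [LHS]big_mkcond.
apply: eq_bigr => nu _.
case: (boolP (nesting nu)) => [/nestingP hn|hn]; last first.
  by rewrite big_pred0 // => i; rewrite (negbTE hn).
case: ifP => hc0.
  have hc : has (relof nu 0) (iota 0 n.+1) := hc0.
  case/hasP: hc => j; rewrite mem_iota => hj h0.
  case: hn => s f _ _.
  have := s _ _ h0 => /andP[hj0 hjn].
  have hi : (j.-1 < n)%N by lia.
  rewrite (big_pred1 (Ordinal hi)) // => i /=.
  apply/idP/eqP => [h|->]; last by rewrite prednK.
  apply: val_inj => /=; have := f _ _ _ h h0; lia.
have hc : has (relof nu 0) (iota 0 n.+1) = false := hc0.
rewrite big_pred0 // => i /=; apply/negbTE/negP => h; move/negP: hc; apply; apply/hasP.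
exists i.+1 => //; rewrite mem_iota; have := ltn_ord i; lia.
Qed.

End H.
Import H.

Module W1.

Lemma iotaS1 m n : iota m.+1 n = map succn (iota m n).
Proof. by elim: n m => [|n IH] m //=; rewrite IH. Qed.

Lemma iota0S n : iota 0 n.+1 = 0 :: map succn (iota 0 n).
Proof. by rewrite /= iotaS1. Qed.

Lemma iota0D m n : iota 0 (m + n) = iota 0 m ++ map (addn m) (iota 0 n).
Proof. by rewrite iotaD add0n -iotaDl addn0. Qed.

Section W.
Variables (K : comNzSemiRingType) (D : finType) (A : wnwa D K).
Local Notation Q := (wQ A).

Lemma sum_in_eq (T : eqType) (r : seq T) (P1 P2 : pred T) (F1 F2 : T -> K) :
  {in r, P1 =1 P2} -> {in r, F1 =1 F2} ->
  (\sum_(x <- r | P1 x) F1 x = \sum_(x <- r | P2 x) F2 x)%R.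
Proof.
move=> hP hF; rewrite [LHS]big_mkcond [RHS]big_mkcond; apply: eq_big_seq => x hx.
by rewrite hP // hF.
Qed.

Definition posw (n : nat) (P : rel) (s : nat -> Q) (a : D) (k : nat) : K :=
  if has (fun i => P i k) (iota 0 k)
  then (\sum_(i <- iota 0 k | P i k) w_ret (s k) (s i) a (s k.+1))%R
  else if has (P k) (iota 0 n) then w_call (s k) a (s k.+1) else w_int (s k) a (s k.+1).

Fixpoint wtr (f : D -> nat -> K) (w : seq D) (k : nat) : K :=
  if w is a :: w' then (f a k * wtr f w' k.+1)%R else 1%R.

Lemma wtr_cat f u v k : wtr f (u ++ v) k = (wtr f u k * wtr f v (k + size u))%R.
Proof.
elim: u k => [|a u IH] k /=; first by rewrite mul1r addn0.
by rewrite IH mulrA addnS.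
Qed.

Lemma wtr_eq f g w k k' : (forall i a, (i < size w)%N -> f a (k + i)%N = g a (k' + i)%N) ->
  wtr f w k = wtr g w k'.
Proof.
elim: w k k' => [|a w IH] k k' //= H.
have := H 0%N a isT; rewrite !addn0 => ->; congr (_ * _)%R.
apply: IH => i b hi; rewrite !addSn -!addnS; exact: H.
Qed.

Lemma posw_ext n P s s' a k : (forall i, (i <= k.+1)%N -> s i = s' i) ->
  posw n P s a k = posw n P s' a k.
Proof.
move=> hs; rewrite /posw !hs //; congr (if _ then _ else _).
apply: sum_in_eq => // i; rewrite mem_iota => /andP[_ hi].
by rewrite hs // ltnW // ltnW.
Qed.

Lemma wtr_sext n P s s' w : (forall i, (i <= size w)%N -> s i = s' i) ->
  wtr (posw n P s) w 0 = wtr (posw n P s') w 0.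
Proof.
move=> hs; apply: wtr_eq => i a hi; rewrite !add0n; apply: posw_ext => x hx.
apply: hs; lia.
Qed.

Lemma posw_shA n P s b i :
  posw n.+1 (shA P) s b i.+1 = posw n P (fun x => s x.+1) b i.
Proof.
rewrite /posw !iota0S /= !has_map !big_cons /= !big_map.
by [].
Qed.


Lemma posw_comb_call j n2 P1 P2 s a :
  posw (j + n2.+1).+1 (comb j P1 P2) s a 0 = w_call (s 0%N) a (s 1%N).
Proof.
rewrite /posw.
have -> : has (comb j P1 P2 0) (iota 0 (j + n2.+1).+1).
  by apply/hasP; exists j.+1; [rewrite mem_iota; lia | rewrite /= eqxx].
by [].
Qed.

Lemma posw_comb_in j n2 P1 P2 s b k : (k < j)%N ->
  posw (j + n2.+1).+1 (comb j P1 P2) s b k.+1 = posw j P1 (fun x => s x.+1) b k.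
Proof.
move=> hk; rewrite /posw.
have e1 : has (fun i => comb j P1 P2 i k.+1) (iota 0 k.+1) = has (fun i => P1 i k) (iota 0 k).
  rewrite iota0S /= eqSS (ltn_eqF hk) /= has_map; apply: eq_in_has => x.
  rewrite mem_iota => /andP[_ hx] /=; have -> : (x < j)%N by lia.
  by rewrite hk.
have e2 : (\sum_(i <- iota 0 k.+1 | comb j P1 P2 i k.+1) w_ret (s k.+1) (s i) b (s k.+2) =
          \sum_(i <- iota 0 k | P1 i k) w_ret (s k.+1) (s i.+1) b (s k.+2))%R.
  rewrite iota0S big_cons /= eqSS (ltn_eqF hk) big_map; apply: sum_in_eq => x //.
  rewrite mem_iota => /andP[_ hx] /=; have -> : (x < j)%N by lia.
  by rewrite hk.
have e3 : has (comb j P1 P2 k.+1) (iota 0 (j + n2.+1).+1) = has (P1 k) (iota 0 j).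
  rewrite iota0S /= has_map iota0D has_cat has_map.
  have -> : has (preim (addn j) (preim succn (comb j P1 P2 k.+1))) (iota 0 n2.+1) = false.
    apply/hasP => -[x _] /=; rewrite hk /=; have -> : (j + x < j)%N = false by lia.
    by have -> : (j < k)%N = false by lia.
  rewrite orbF; apply: eq_in_has => x; rewrite mem_iota => /andP[_ hx] /=.
  by rewrite hk hx.
by rewrite e1 e2 e3.
Qed.

Lemma posw_comb_ret j n2 P1 P2 s b :
  posw (j + n2.+1).+1 (comb j P1 P2) s b j.+1 = w_ret (s j.+1) (s 0%N) b (s j.+2).
Proof.
rewrite /posw iota0S /= eqxx /= big_cons /= eqxx big_map big_pred0 ?addr0 // => x /=.
by rewrite ltnn !andbF.
Qed.

Lemma posw_comb_out j n2 P1 P2 s b k : (k < n2)%N ->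
  posw (j + n2.+1).+1 (comb j P1 P2) s b (j.+2 + k) =
  posw n2 P2 (fun x => s (j.+2 + x)%N) b k.
Proof.
move=> hk.
have hl : forall x, (x < j.+2)%N -> comb j P1 P2 x (j.+2 + k) = false.
  move=> [|x] hx; first by rewrite /=; apply/eqP; lia.
  rewrite !addSn /=; have -> : ((j + k).+1 < j)%N = false by lia.
  by rewrite andbF; have -> : (j < x)%N = false by lia.
have hr : forall x, (x < j.+2)%N -> comb j P1 P2 (j.+2 + k) x = false.
  move=> [|x] hx; first by rewrite !addSn.
  rewrite !addSn /=; have -> : ((j + k).+1 < j)%N = false by lia.
  have -> : (j < x)%N = false by lia.
  by rewrite andbF.
have hm : forall x y, comb j P1 P2 (j.+2 + x) (j.+2 + y) = P2 x y.
  by move=> x y; rewrite ![(j.+2 + _)%N]addnC comb_out.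
rewrite /posw (_ : (j + n2.+1).+1 = j.+2 + n2)%N; last by lia.
rewrite !iota0D !has_cat big_cat !has_map big_map.
have -> : has (fun i => comb j P1 P2 i (j.+2 + k)) (iota 0 j.+2) = false.
  by apply/hasP => -[x]; rewrite mem_iota => hx; rewrite hl //; lia.
have -> : has (comb j P1 P2 (j.+2 + k)) (iota 0 j.+2) = false.
  by apply/hasP => -[x]; rewrite mem_iota => hx; rewrite hr //; lia.
rewrite big1_seq ?add0r; last first.
  move=> x /andP[hc]; rewrite mem_iota => hx; have hx' : (x < j.+2)%N by lia.
  by rewrite hl in hc.
rewrite (eq_has (a2 := fun i => P2 i k)); last by move=> x; exact: hm.
rewrite (eq_has (a1 := preim _ _) (a2 := P2 k)); last by move=> x; exact: hm.
rewrite addnS; congr (if _ then _ else _).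
by rewrite Monoid.mul1m; apply: eq_bigl => x; exact: hm.
Qed.

End W.

End W1.
Import W1.

Module W2.

Section W2.
Variables (K : comNzSemiRingType) (D : finType) (A : wnwa D K).
Local Notation Q := (wQ A).
Local Notation posw := (@W1.posw K D A).

Lemma T1 (T : finType) n (F : n.+1.-tuple T -> K) :
  (\sum_(t : n.+1.-tuple T) F t = \sum_(x : T) \sum_(t : n.-tuple T) F [tuple of x :: t])%R.
Proof.
rewrite pair_bigA /=.
rewrite (reindex (fun p : T * n.-tuple T => [tuple of p.1 :: p.2])) /=; last first.
  apply: onW_bij; exists (fun t => (thead t, [tuple of behead t])).
    by move=> [x t] /=; congr pair; apply: val_inj.
  by move=> t /=; rewrite [RHS]tuple_eta.
by [].
Qed.

Lemma T2 (T : finType) m n (F : (m + n).-tuple T -> K) :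
  (\sum_(t : (m + n).-tuple T) F t =
   \sum_(t1 : m.-tuple T) \sum_(t2 : n.-tuple T) F [tuple of t1 ++ t2])%R.
Proof.
elim: m F => [|m IH] F.
  rewrite (big_pred1 [tuple]) => [|t]; last by apply/esym/eqP; apply: tuple0.
  by apply: eq_bigr => t _; congr F; apply: val_inj.
transitivity (\sum_(x : T) \sum_(t : (m + n).-tuple T) F [tuple of x :: t])%R.
  exact: (T1 F).
rewrite (T1 (fun t1 : m.+1.-tuple T => \sum_(t2 : n.-tuple T) F [tuple of t1 ++ t2])%R).
apply: eq_bigr => x _; rewrite IH; apply: eq_bigr => t1 _; apply: eq_bigr => t2 _.
by congr F; apply: val_inj.
Qed.

Definition Rn n p q (w : seq D) : K :=
  (\sum_(nu : {set 'I_n * 'I_n} | nesting nu) \sum_(t : n.-tuple Q)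
     (last p t == q)%:R * wtr (posw n (relof nu) (nth p (p :: t))) w 0)%R.
Definition R p q (w : seq D) := Rn (size w) p q w.

Lemma Rn_size n p q w : size w = n -> Rn n p q w = R p q w.
Proof. by move=> <-. Qed.

Lemma WA n P p q a w' : size w' = n ->
 (\sum_(t : n.+1.-tuple Q) (last p t == q)%:R *
      wtr (posw n.+1 (shA P) (nth p (p :: t))) (a :: w') 0 =
  \sum_(q1 : Q) w_int p a q1 * \sum_(t : n.-tuple Q) (last q1 t == q)%:R *
      wtr (posw n P (nth q1 (q1 :: t))) w' 0)%R.
Proof.
move=> hs; rewrite T1; apply: eq_bigr => q1 _; rewrite mulr_sumr; apply: eq_bigr => t _ /=.
have -> : posw n.+1 (shA P) (nth p [:: p, q1 & t]) a 0 = w_int p a q1.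
  rewrite /W1.posw /=.
  by have -> : has (shA P 0) (iota 1 n) = false by apply/hasP => -[x _].
rewrite (@wtr_eq _ _ _ (posw n P (fun x => nth p [:: p, q1 & t] x.+1)) w' 1 0); last first.
  by move=> i b hi; rewrite add0n add1n posw_shA.
rewrite (@wtr_sext _ _ _ n P _ (nth q1 (q1 :: t))); last first.
  move=> i hi /=; apply: set_nth_default; rewrite /= size_tuple; lia.
by rewrite mulrCA.
Qed.


Lemma sum_delta (T : finType) (x : T) (F : T -> K) :
  (\sum_(y : T) (x == y)%:R * F y = F x)%R.
Proof.
rewrite (bigD1 x) //= eqxx mul1r big1 ?addr0 // => y /negPf.
by rewrite eq_sym => ->; rewrite mul0r.
Qed.

Lemma states_cat (p q1 q3 : Q) (t1 t2 : seq Q) :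
  let s := nth p (p :: (q1 :: t1) ++ (q3 :: t2)) in
  [/\ forall x, (x <= size t1)%N -> s x.+1 = nth q1 (q1 :: t1) x,
      s (size t1).+1 = last q1 t1,
      s (size t1).+2 = q3 &
      forall x, (x <= size t2)%N -> s ((size t1).+2 + x)%N = nth q3 (q3 :: t2) x].
Proof.
move=> s; split.
- move=> x hx; rewrite /s /= -cat_cons nth_cat /=.
  have -> : (x < (size t1).+1)%N by lia.
  by apply: set_nth_default => /=; lia.
- rewrite /s /= -cat_cons nth_cat /= ltnSn.
  by have := nth_last p (q1 :: t1).
- by rewrite /s /= nth_cat ltnn subnn.
- move=> x hx; rewrite /s addSn /= nth_cat.
  have -> : (size t1 + x < size t1)%N = false by lia.
  rewrite (_ : (size t1 + x - size t1)%N = x); last by lia.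
  by apply: set_nth_default => /=; lia.
Qed.


Lemma WB N j n2 P1 P2 p q a u b v : N = (j + n2.+1).+1 -> size u = j -> size v = n2 ->
 (\sum_(t : N.-tuple Q) (last p t == q)%:R *
      wtr (posw N (comb j P1 P2) (nth p (p :: t))) (a :: u ++ b :: v) 0 =
  \sum_(q1 : Q) \sum_(q2 : Q) \sum_(q3 : Q)
     w_call p a q1 * (\sum_(t : j.-tuple Q) (last q1 t == q2)%:R *
                         wtr (posw j P1 (nth q1 (q1 :: t))) u 0)
     * w_ret q2 p b q3 * (\sum_(t : n2.-tuple Q) (last q3 t == q)%:R *
                         wtr (posw n2 P2 (nth q3 (q3 :: t))) v 0))%R.
Proof.
move=> -> hu hv.
rewrite T1; apply: eq_bigr => q1 _.
rewrite T2.
under eq_bigr => t1 _ do rewrite T1.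
transitivity (\sum_(t1 : j.-tuple Q) \sum_(q3 : Q) \sum_(t2 : n2.-tuple Q)
   w_call p a q1 * ((last q3 t2 == q)%:R * (wtr (posw j P1 (nth q1 (q1 :: t1))) u 0 *
     w_ret (last q1 t1) p b q3 * wtr (posw n2 P2 (nth q3 (q3 :: t2))) v 0)))%R.
  apply: eq_bigr => t1 _; apply: eq_bigr => q3 _; apply: eq_bigr => t2 _.
  rewrite /= last_cat /= posw_comb_call /= wtr_cat /= hu add1n.
  have st1 := size_tuple t1; have st2 := size_tuple t2.
  set s := nth p [:: p, q1 & t1 ++ q3 :: t2].
  have [h1 h2 h3 h4] := states_cat p q1 q3 t1 t2.
  rewrite st1 in h1 h2 h3 h4.
  rewrite (@wtr_eq _ _ (posw (j + n2.+1).+1 (comb j P1 P2) s) (posw j P1 (fun x => s x.+1)) u 1 0);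
    last by move=> i c hi; rewrite add0n add1n posw_comb_in // -hu.
  rewrite (@wtr_sext _ _ _ j P1 _ (nth q1 (q1 :: t1))); last by move=> x hx; apply: h1; rewrite -hu.
  have h2' : s j.+1 = last q1 t1 := h2.
  have h3' : s j.+2 = q3 := h3.
  rewrite posw_comb_ret h2' h3'.
  rewrite (@wtr_eq _ _ (posw (j + n2.+1).+1 (comb j P1 P2) s) (posw n2 P2 (fun x => s (j.+2 + x)%N)) v j.+2 0);
    last by move=> i c hi; rewrite add0n posw_comb_out // -hv.
  rewrite (@wtr_sext _ _ _ n2 P2 _ (nth q3 (q3 :: t2))); last by move=> x hx; apply: h4; rewrite st2 -hv.
  rewrite /s /=; ring.
symmetry.
under eq_bigr => q2 _ do under eq_bigr => q3 _ do rewrite -!mulrA mulr_suml mulr_sumr.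
under eq_bigr => q2 _ do rewrite exchange_big.
rewrite exchange_big; apply: eq_bigr => t1 _.
transitivity (\sum_(q2 : Q) (last q1 t1 == q2)%:R * (\sum_(q3 : Q) w_call p a q1 *
   wtr (posw j P1 (nth q1 (q1 :: t1))) u 0 * w_ret q2 p b q3 *
   \sum_(t : n2.-tuple Q) (last q3 t == q)%:R * wtr (posw n2 P2 (nth q3 (q3 :: t))) v 0))%R.
  apply: eq_bigr => q2 _; rewrite mulr_sumr; apply: eq_bigr => q3 _; ring.
rewrite sum_delta; apply: eq_bigr => q3 _; rewrite mulr_sumr; apply: eq_bigr => t2 _; ring.
Qed.


Lemma WB' N j n2 P1 P2 p q a w u b v : N = (j + n2.+1).+1 -> w = u ++ b :: v ->
  size u = j -> size v = n2 ->
 (\sum_(t : N.-tuple Q) (last p t == q)%:R *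
      wtr (posw N (comb j P1 P2) (nth p (p :: t))) (a :: w) 0 =
  \sum_(q1 : Q) \sum_(q2 : Q) \sum_(q3 : Q)
     w_call p a q1 * (\sum_(t : j.-tuple Q) (last q1 t == q2)%:R *
                         wtr (posw j P1 (nth q1 (q1 :: t))) u 0)
     * w_ret q2 p b q3 * (\sum_(t : n2.-tuple Q) (last q3 t == q)%:R *
                         wtr (posw n2 P2 (nth q3 (q3 :: t))) v 0))%R.
Proof. by move=> hN ->; exact: WB. Qed.

Lemma L p q a w' : R p q (a :: w') =
  (\sum_(q1 : Q) w_int p a q1 * R q1 q w' +
   \sum_(i < size w') \sum_(q1 : Q) \sum_(q2 : Q) \sum_(q3 : Q)
     w_call p a q1 * R q1 q2 (take i w') * w_ret q2 p (nth a w' i) q3 * R q3 q (drop i.+1 w'))%R.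
Proof.
rewrite [LHS]/R [LHS]/Rn /=.
rewrite (@SD _ (size w') (fun P => \sum_(t : (size w').+1.-tuple Q) (last p t == q)%:R *
      wtr (posw (size w').+1 P (nth p (p :: t))) (a :: w') 0)%R).
congr (_ + _)%R.
  transitivity (\sum_(nu : {set 'I_(size w') * 'I_(size w')} | nesting nu) \sum_(q1 : Q)
     w_int p a q1 * \sum_(t : (size w').-tuple Q) (last q1 t == q)%:R *
      wtr (posw (size w') (relof nu) (nth q1 (q1 :: t))) w' 0)%R.
    by apply: eq_bigr => nu _; exact: WA.
  rewrite exchange_big; apply: eq_bigr => q1 _; by rewrite -mulr_sumr /R /Rn.
apply: eq_bigr => i _.
have hi := ltn_ord i.
have hw : w' = take i w' ++ nth a w' i :: drop i.+1 w' by rewrite -drop_nth // cat_take_drop.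
have hu : size (take i w') = i by rewrite size_take hi.
have hv : size (drop i.+1 w') = (size w' - i.+1)%N by rewrite size_drop.
have hN : (size w').+1 = (i + (size w' - i.+1).+1).+1 by lia.
set n2 := (size w' - i.+1)%N.
set u := take i w'. set v := drop i.+1 w'. set b := nth a w' i.
transitivity (\sum_(x : {set 'I_i * 'I_i} * {set 'I_n2 * 'I_n2} | nesting x.1 && nesting x.2)
  \sum_(q1 : Q) \sum_(q2 : Q) \sum_(q3 : Q)
     w_call p a q1 * (\sum_(t : i.-tuple Q) (last q1 t == q2)%:R *
                         wtr (posw i (relof x.1) (nth q1 (q1 :: t))) u 0)
     * w_ret q2 p b q3 * (\sum_(t : n2.-tuple Q) (last q3 t == q)%:R *
                         wtr (posw n2 (relof x.2) (nth q3 (q3 :: t))) v 0))%R.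
  by apply: eq_bigr => x _; exact: WB' hN hw hu hv.
rewrite exchange_big; apply: eq_bigr => q1 _.
rewrite exchange_big; apply: eq_bigr => q2 _.
rewrite exchange_big; apply: eq_bigr => q3 _.
rewrite -(Rn_size _ _ (hu : size u = i)) -(Rn_size _ _ (hv : size v = n2)) /Rn.
rewrite -!mulrA [in RHS]mulr_suml [in RHS]mulr_sumr.
under [RHS]eq_bigr => y1 _ do rewrite !mulr_sumr.
rewrite [in RHS]pair_big; apply: eq_bigr => x _ /=; ring.
Qed.

End W2.

End W2.
Import W2.

Module W3.

Section W3.
Variables (K : comNzSemiRingType) (D : finType) (A : wnwa D K).
Local Notation Q := (wQ A).
Local Notation posw := (@W1.posw K D A).

Lemma wtr_prod_nth x0 (f : D -> nat -> K) (w : seq D) k :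
  wtr f w k = (\prod_(i < size w) f (nth x0 w i) (k + i)%N)%R.
Proof.
elim: w k => [|a w IH] k /=; first by rewrite big_ord0.
rewrite big_ord_recl /= addn0 IH; congr (_ * _)%R.
by apply: eq_bigr => i _; rewrite /= addSnnS.
Qed.

Lemma PW (w : seq D) (nu : {set 'I_(size w) * 'I_(size w)}) (hx : nesting nu)
   (r : {ffun 'I_(size w).+1 -> Q}) (s : nat -> Q) (k : 'I_(size w)) :
  (forall i, (i <= size w)%N -> r (inord i) = s i) ->
  pos_weight (x := NWord nu) r k = posw (size w) (relof nu) s (tnth (in_tuple w) k) k.
Proof.
move=> hs; rewrite /pos_weight /W1.posw /=.
have [s1 f1 g1 c1] := (nestingP nu).1 hx.
have hk := ltn_ord k.
case: pickP => [i hi | none].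
  have hr : relof nu i k by rewrite relofE.
  have hik := s1 _ _ hr.
  have -> : has (fun j => relof nu j k) (iota 0 k).
    by apply/hasP; exists (nat_of_ord i) => //; rewrite mem_iota; lia.
  have e : (fun j => relof nu j k) =1 pred1 (nat_of_ord i).
    move=> j /=; apply/idP/eqP => [h|->//]; exact: (g1 _ _ _ h hr).
  rewrite -big_filter (eq_filter e) filter_pred1_uniq ?iota_uniq //; last by rewrite mem_iota; lia.
  rewrite big_seq1 !hs //; lia.
have -> : has (fun j => relof nu j k) (iota 0 k) = false.
  apply/hasP => -[j]; rewrite mem_iota => hj /relof_ex [a [b [ea eb ab]]].
  have ebk : b = k by apply: val_inj.
  by subst b; have := none a; rewrite ab.
have -> : [exists j, (k, j) \in nu] = has (relof nu k) (iota 0 (size w)).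
  apply/existsP/hasP => [[j hj]|[j _ /relof_ex [a [b [ea eb ab]]]]].
    by exists (nat_of_ord j); [rewrite mem_iota; have := ltn_ord j; lia | rewrite relofE].
  have eak : a = k by apply: val_inj.
  by subst a; exists b.
by rewrite !hs //; lia.
Qed.

Lemma FT (T : finType) m (F : {ffun 'I_m -> T} -> K) :
  (\sum_(r : {ffun 'I_m -> T}) F r = \sum_(t : m.-tuple T) F [ffun i => tnth t i])%R.
Proof.
rewrite (reindex (fun t : m.-tuple T => [ffun i => tnth t i])) //.
apply: onW_bij; exists (fun r : {ffun 'I_m -> T} => [tuple r i | i < m]).
  by move=> t; apply: eq_from_tnth => i; rewrite tnth_mktuple ffunE.
by move=> r; apply/ffunP => i; rewrite !ffunE tnth_mktuple.
Qed.

Lemma beh (w : seq D) (nu : {set 'I_(size w) * 'I_(size w)}) : nesting nu ->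
  behavior A (NWord nu) =
  (\sum_(p : Q) \sum_(q : Q) w_iota p * w_kappa q *
     \sum_(t : (size w).-tuple Q) (last p t == q)%:R *
        wtr (posw (size w) (relof nu) (nth p (p :: t))) w 0)%R.
Proof.
move=> hn; rewrite /behavior /= FT T1; apply: eq_bigr => p _.
under eq_bigr => q _ do rewrite mulr_sumr.
rewrite exchange_big; apply: eq_bigr => t _.
transitivity (\sum_(q : Q) (last p t == q)%:R * (w_iota p * w_kappa q *
  wtr (posw (size w) (relof nu) (nth p (p :: t))) w 0))%R; last first.
  by apply: eq_bigr => q _; ring.
rewrite sum_delta !ffunE /=.
have -> : tnth [tuple of p :: t] ord_max = last p t.
  rewrite (tnth_nth p) /=.
  have := nth_last p (p :: t); rewrite /= size_tuple => ->.
  by [].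
case: w nu hn t => [|c w] nu hn t.
  by rewrite big_ord0 /=; ring.
rewrite (wtr_prod_nth c).
rewrite [in RHS]mulrAC; congr (_ * _ * _)%R; apply: eq_bigr => k _.
rewrite (@PW (c :: w) nu hn _ (nth p (p :: t))) ?add0n ?(tnth_nth c) // => i hi.
by rewrite ffunE (tnth_nth p) /= inordK //; lia.
Qed.

Lemma R_nil (p q : Q) : R p q [::] = ((p == q)%:R)%R.
Proof.
rewrite /R /Rn /=.
rewrite (big_pred1 set0) => [|nu]; last first.
  have -> : nu = set0 by apply/setP => -[[]].
  by rewrite /= eqxx; apply/and4P; split; apply/forallP => -[].
rewrite (big_pred1 [tuple]) => [|t]; last by apply/esym/eqP; apply: tuple0.
by rewrite /= mulr1.
Qed.

End W3.

End W3.
Import W3.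

Module W4.

Section G.
Variables (K : comNzSemiRingType) (D : finType).
Local Open Scope ring_scope.

Lemma sum_option (T : finType) (F : option T -> K) :
  \sum_(o : option T) F o = F None + \sum_(x : T) F (Some x).
Proof.
rewrite (bigD1 None) //=; congr (_ + _).
rewrite (reindex_omap Some id) /=; last by case.
by apply: eq_bigl => x; rewrite eqxx.
Qed.

Lemma sum_pair (T1 T2 : finType) (F : T1 * T2 -> K) :
  \sum_(p : T1 * T2) F p = \sum_(a : T1) \sum_(b : T2) F (a, b).
Proof. by rewrite pair_bigA; apply: eq_bigr => -[]. Qed.

Lemma cauchy_eps_l (G : series D K) w : cauchy (char_word K [::]) G w = G w.
Proof.
rewrite /cauchy big_ord_recl /= /char_word take0 drop0 eqxx mul1r big1 ?addr0 // => i _.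
have : size (take (lift ord0 i) w) != 0%N.
  rewrite size_take /= /bump leq0n add1n; have := ltn_ord i; case: ifP => _; lia.
by case: (take _ w) => [|? ?] //= _; rewrite mul0r.
Qed.

Lemma cauchy_eps_r (F : series D K) w : cauchy F (char_word K [::]) w = F w.
Proof.
rewrite /cauchy big_ord_recr /= /char_word take_size drop_size eqxx mulr1 big1 ?add0r // => i _.
have : size (drop (widen_ord (leqnSn _) i) w) != 0%N.
  by rewrite size_drop /=; have := ltn_ord i; lia.
by case: (drop _ w) => [|? ?] //= _; rewrite mulr0.
Qed.

Lemma cauchy_letter b (G : series D K) w :
  cauchy (char_word K [:: b]) G w = if w is c :: w' then (c == b)%:R * G w' else 0.
Proof.
rewrite /cauchy /char_word; case: w => [|c w'] /=.
  by rewrite big_ord_recl big_ord0 /= mul0r addr0.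
rewrite big_ord_recl /= mul0r add0r big_ord_recl /= take0 drop0.
rewrite big1 ?addr0.
  by congr (_ * _); rewrite eqseq_cons andbT.
move=> i _; rewrite /= eqseq_cons.
have : size (take (lift ord0 i) w') != 0%N.
  rewrite size_take /= /bump leq0n add1n; have := ltn_ord i; case: ifP => _; lia.
by case: (take _ w') => [|? ?] //= _; rewrite andbF mul0r.
Qed.

Lemma cauchy_split c (F G : series D K) b w :
  cauchy F (cauchy (char_word K [:: b]) G) w =
  \sum_(i < size w) F (take i w) * ((nth c w i == b)%:R * G (drop i.+1 w)).
Proof.
rewrite /cauchy big_ord_recr /=.
have -> : \sum_(i < (size (drop (size w) w)).+1) char_word K [:: b] (take i (drop (size w) w)) *
          G (drop i (drop (size w) w)) = 0.
  by rewrite drop_size /= big_ord_recl big_ord0 /= /char_word mul0r addr0.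
rewrite mulr0 addr0; apply: eq_bigr => i _.
have hi := ltn_ord i.
rewrite (drop_nth c) //; congr (_ * _).
exact: (cauchy_letter b G (nth c w i :: drop i.+1 w)).
Qed.

End G.

End W4.
Import W4.

Module W5.

Section G2.
Variables (K : comNzSemiRingType) (D : finType) (A : wnwa D K).
Local Notation Q := (wQ A).
Local Open Scope ring_scope.

Local Notation X := (option (Q * Q)).
Local Notation Idx := (D * option (Q * Q) * option (D * option (Q * Q)))%type.

Definition Tser (p q : Q) : series D K := fun w => if w is [::] then 0 else R p q w.

Definition SX (x : X) : series D K :=
  match x with
  | Some pq => Tser pq.1 pq.2
  | None => fun w => \sum_(p : Q) \sum_(q : Q) w_iota p * w_kappa q * Tser p q w
  end.

Definition ovar (o : option (Q * Q)) : seq (D + X) :=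
  if o is Some xy then [:: inr (Some xy)] else [::].

Definition mono (i : Idx) : seq (D + X) :=
  inl i.1.1 :: ovar i.1.2 ++ (if i.2 is Some bo then inl bo.1 :: ovar bo.2 else [::]).

Definition dd (o : option (Q * Q)) (x y : Q) : K :=
  if o is Some xy then ((xy.1 == x) && (xy.2 == y))%:R else (x == y)%:R.

Definition coefS (p q : Q) (i : Idx) : K :=
  if i.2 is Some bo then
    \sum_(q1 : Q) \sum_(q2 : Q) \sum_(q3 : Q)
      w_call p i.1.1 q1 * dd i.1.2 q1 q2 * w_ret q2 p bo.1 q3 * dd bo.2 q3 q
  else \sum_(q1 : Q) w_int p i.1.1 q1 * dd i.1.2 q1 q.

Definition coef (x : X) (i : Idx) : K :=
  if x is Some pq then coefS pq.1 pq.2 i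
  else \sum_(p : Q) \sum_(q : Q) w_iota p * w_kappa q * coefS p q i.

Definition Poly (x : X) (u : seq (D + X)) : K :=
  if [pick i | mono i == u] is Some i then coef x i else 0.

Definition supp : seq (seq (D + X)) := [seq mono i | i <- index_enum Idx].

Definition Fo (o : option (Q * Q)) : series D K :=
  if o is Some xy then Tser xy.1 xy.2 else char_word K [::].

Definition Go (o : option (D * option (Q * Q))) : series D K :=
  if o is Some bo then cauchy (char_word K [:: bo.1]) (Fo bo.2) else char_word K [::].

Lemma mono_inj : injective mono.
Proof.
move=> [[a o1] o2] [[a' o1'] o2']; rewrite /mono /=.
case: o1 => [x|]; case: o1' => [x'|]; case: o2 => [[b [y|]]|]; case: o2' => [[b' [y'|]]|] => //= e;
  injection e; intros; subst; reflexivity.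
Qed.

Lemma Poly_mono x i : Poly x (mono i) = coef x i.
Proof.
rewrite /Poly; case: pickP => [j /eqP/mono_inj -> //|/(_ i)].
by rewrite eqxx.
Qed.

Lemma mon_ovar o m : mon_eval SX (ovar o ++ m) = cauchy (Fo o) (mon_eval SX m).
Proof.
case: o => [xy|] //=.
by apply: functional_extensionality => w; rewrite cauchy_eps_l.
Qed.

Lemma mon_ovar0 o : mon_eval SX (ovar o) = Fo o.
Proof.
case: o => [xy|] //=.
by apply: functional_extensionality => w; rewrite cauchy_eps_r.
Qed.

Lemma mon_mono i : mon_eval SX (mono i) =
  cauchy (char_word K [:: i.1.1]) (cauchy (Fo i.1.2) (Go i.2)).
Proof.
rewrite /mono /= mon_ovar; congr cauchy; congr cauchy.
by case: i.2 => [bo|] //=; rewrite mon_ovar0.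
Qed.

Lemma sum_delta' (T : finType) (x : T) (F : T -> K) :
  \sum_(y : T) (y == x)%:R * F y = F x.
Proof.
rewrite -(sum_delta x F); apply: eq_bigr => y _; by rewrite eq_sym.
Qed.

Lemma R_split x y u : R x y u = \sum_(o : option (Q * Q)) dd o x y * Fo o u.
Proof.
rewrite sum_option sum_pair /=.
transitivity ((x == y)%:R * char_word K [::] u + Tser x y u); last first.
  congr (_ + _); symmetry.
  transitivity (\sum_(a : Q) (a == x)%:R * \sum_(b : Q) (b == y)%:R * Tser a b u).
    apply: eq_bigr => a _; rewrite mulr_sumr; apply: eq_bigr => b _.
    by rewrite /= -mulnb natrM mulrA.
  by rewrite sum_delta' sum_delta'.
case: u => [|c u] /=; first by rewrite R_nil /char_word eqxx mulr1 addr0.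
by rewrite /char_word /= mulr0 add0r.
Qed.

Lemma supp_sum x w :
  \sum_(u <- supp) Poly x u * mon_eval SX u w = \sum_(i : Idx) coef x i * mon_eval SX (mono i) w.
Proof.
rewrite /supp big_map; apply: eq_bigr => i _.
by rewrite Poly_mono.
Qed.


Lemma sum2_mul (I J : finType) (a b : K) (F : I -> K) (G : J -> K) :
  a * (\sum_(x : I) F x) * b * (\sum_(y : J) G y) = \sum_(x : I) \sum_(y : J) a * F x * b * G y.
Proof.
rewrite [a * _]mulr_sumr !mulr_suml; apply: eq_bigr => x _.
rewrite mulr_sumr; apply: eq_bigr => y _; ring.
Qed.

Lemma eqS p q w : Tser p q w = \sum_(i : Idx) coefS p q i * mon_eval SX (mono i) w.
Proof.
under eq_bigr => i _ do rewrite mon_mono.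
rewrite sum_pair sum_pair.
case: w => [|c w'].
  rewrite /Tser big1 // => a _; rewrite big1 // => o1 _; rewrite big1 // => o2 _.
  by rewrite cauchy_letter mulr0.
rewrite /Tser L.
transitivity (\sum_(a : D) (c == a)%:R * \sum_(o1 : option (Q * Q)) \sum_(o2 : option (D * option (Q * Q)))
   coefS p q (a, o1, o2) * cauchy (Fo o1) (Go o2) w'); last first.
  apply: eq_bigr => a _; rewrite mulr_sumr; apply: eq_bigr => o1 _.
  rewrite mulr_sumr; apply: eq_bigr => o2 _; rewrite cauchy_letter /=; ring.
rewrite sum_delta.
under [RHS]eq_bigr => o1 _ do rewrite sum_option.
rewrite [RHS]big_split /=; congr (_ + _).
  under [RHS]eq_bigr => o1 _ do rewrite cauchy_eps_r mulr_suml.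
  rewrite [RHS]exchange_big; apply: eq_bigr => q1 _.
  rewrite R_split mulr_sumr; apply: eq_bigr => o1 _; ring.
transitivity (\sum_(i < size w') \sum_(o1 : option (Q * Q)) \sum_(o3 : option (Q * Q))
   coefS p q (c, o1, Some (nth c w' i, o3)) * (Fo o1 (take i w') * Fo o3 (drop i.+1 w'))).
  apply: eq_bigr => i _.
  under eq_bigr => q1 _ do under eq_bigr => q2 _ do under eq_bigr => q3 _ do
    rewrite !R_split sum2_mul.
  under eq_bigr => q1 _ do under eq_bigr => q2 _ do rewrite exchange_big.
  under eq_bigr => q1 _ do rewrite exchange_big.
  rewrite exchange_big; apply: eq_bigr => o1 _.
  under eq_bigr => q1 _ do under eq_bigr => q2 _ do rewrite exchange_big.
  under eq_bigr => q1 _ do rewrite exchange_big.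
  rewrite exchange_big; apply: eq_bigr => o3 _.
  rewrite /coefS /= !mulr_suml; apply: eq_bigr => q1 _.
  rewrite !mulr_suml; apply: eq_bigr => q2 _.
  rewrite !mulr_suml; apply: eq_bigr => q3 _; ring.
symmetry.
under eq_bigr => o1 _ do rewrite sum_pair.
under eq_bigr => o1 _ do under eq_bigr => b _ do under eq_bigr => o3 _ do
  rewrite /= (cauchy_split c) mulr_sumr.
under eq_bigr => o1 _ do under eq_bigr => b _ do rewrite exchange_big.
under eq_bigr => o1 _ do rewrite exchange_big.
rewrite exchange_big; apply: eq_bigr => i _.
apply: eq_bigr => o1 _.
rewrite exchange_big; apply: eq_bigr => o3 _.
transitivity (\sum_(b : D) (b == nth c w' i)%:R *
   (coefS p q (c, o1, Some (b, o3)) * (Fo o1 (take i w') * Fo o3 (drop i.+1 w')))).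
  apply: eq_bigr => b _; rewrite eq_sym; ring.
by rewrite sum_delta'.
Qed.

End G2.

End W5.
Import W5.


Theorem proposition6p3 (K : comNzSemiRingType) (D : finType) (S : nword D -> K) :
  regular_nw S -> algebraic (proj_nw S).
Proof.
move=> [A HA].
exists (option (wQ A * wQ A)), (@Poly K D A), (@supp K D A), (@SX K D A), None.
split.
- rewrite map_inj_uniq ?index_enum_uniq //; exact: mono_inj.
- move=> x u; rewrite /Poly; case: pickP => [i /eqP <- _|_]; last by rewrite eqxx.
  by apply: map_f; rewrite mem_index_enum.
- move=> x y; rewrite /Poly; split.
    by case: pickP => // -[[a o1] o2].
  by case: pickP => // -[[a o1] o2].
- case=> [pq|] //=; rewrite big1 // => p _; rewrite big1 // => q _; by rewrite GRing.mulr0.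
split.
  move=> x w; rewrite supp_sum; case: x => [[p q]|]; first exact: eqS.
  rewrite /=.
  under eq_bigr => p _ do under eq_bigr => q _ do rewrite eqS GRing.mulr_sumr.
  under eq_bigr => p _ do rewrite exchange_big.
  rewrite exchange_big; apply: eq_bigr => i _.
  rewrite GRing.mulr_suml; apply: eq_bigr => p _.
  rewrite GRing.mulr_suml; apply: eq_bigr => q _; by rewrite GRing.mulrA.
move=> w; rewrite /proj_nw.
case: w => [|c w'] /=.
  by rewrite big1 // => p _; rewrite big1 // => q _; rewrite GRing.mulr0.
transitivity (\sum_(nu : {set 'I_(size (c :: w')) * 'I_(size (c :: w'))} | nesting nu)
   behavior A (NWord nu))%R.
  by apply: eq_bigr => nu hn; apply: HA; rewrite /is_nw /= hn.
under [LHS]eq_bigr => nu hn do rewrite (@beh K D A (c :: w') nu hn).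
rewrite /SX /Tser /R /Rn.
under [RHS]eq_bigr => p _ do under eq_bigr => q _ do rewrite GRing.mulr_sumr.
under [RHS]eq_bigr => p _ do rewrite exchange_big.
rewrite [RHS]exchange_big; apply: eq_bigr => nu _.
by [].
Qed.
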